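(* Let $a\in \mathcal{A}$. Then the following are equivalent: (1) $a$ has a $w$-weighted core inverse. (2) $aw\in \mathcal{A}^{\#}$ and $waw\in \mathcal{A}^{(1,3)}$.
   Context: $\mathcal{A}$ is a complex Banach *-algebra with identity and $w\in\mathcal{A}$. $a$ has a $w$-weighted core inverse if there is $x$ with $a(wx)^2=x$, $(wawx)^*=wawx$, $xw(aw)^2=aw$. $\mathcal{A}^{\#}$ is the set of group invertible elements; $\mathcal{A}^{(1,3)}$ is the set of $b$ having some $y$ with $b=byb$ and $(by)^*=by$. *)

(* Defs.v *)
From mathcomp Require Import all_boot all_algebra.
Set Implicit Arguments. Unset Strict Implicit. Unset Printing Implicit Defensive.
Import GRing.Theory Num.Theory.
Local Open Scope ring_scope.

(* An involution on a complex algebra A (here C is a numeric closed field,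
   e.g. algC, standing for the complex numbers): conjugate-linear,
   anti-multiplicative and involutive.  The Banach (norm/completeness)
   structure plays no role in the statement and is omitted. *)
Definition is_star (C : numClosedFieldType) (A : algType C) (s : A -> A) : Prop :=
  [/\ forall x y : A, s (x + y) = s x + s y,
      forall (k : C) (x : A), s (k *: x) = (Num.conj k) *: s x,
      forall x y : A, s (x * y) = s y * s x
    & forall x : A, s (s x) = x].

Definition w_core_invertible (R : nzRingType) (s : R -> R) (a w : R) : Prop :=
  exists x : R, [/\ a * (w * x) ^+ 2 = x,
                    s (w * a * w * x) = w * a * w * x
                  & x * w * (a * w) ^+ 2 = a * w].

Definition group_invertible (R : nzRingType) (b : R) : Prop :=
  exists y : R, [/\ b * y * b = b, y * b * y = y & b * y = y * b].

Definition inv13 (R : nzRingType) (s : R -> R) (b : R) : Prop :=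
  exists y : R, b * y * b = b /\ s (b * y) = b * y.

(* Main.v *)
Require Import Defs.
From mathcomp Require Import all_boot all_algebra.
Local Open Scope ring_scope.
Import GRing.Theory.

Lemma ext2 {R : nzRingType} (x y z : R) : x * y = z -> forall p, p * x * y = p * z.
Proof. by move=> H p; rewrite -H mulrA. Qed.
Arguments ext2 {R x y z}.
Lemma ext3 {R : nzRingType} (x y u z : R) : x * y * u = z -> forall p, p * x * y * u = p * z.
Proof. by move=> H p; rewrite -H !mulrA. Qed.
Arguments ext3 {R x y u z}.

Lemma dir1 (R : nzRingType) (b z : R) : b * z * z = z -> z * b * b = b ->
  group_invertible b /\ b * z * b = b.
Proof.
move=> F1 F2.
have F3 : z * b * z = z.
  rewrite -[in RHS]F1 -[X in X*z*z]F2 (ext3 F1) //.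
have F4 : b * z * b = b.
  rewrite -[in RHS]F2 -[X in X*b*b]F1 (ext3 F2) //.
split=> //.
exists (z * z * b); split.
- by rewrite !mulrA F1 F2.
- by rewrite !mulrA (ext3 F2) F3.
- by rewrite !mulrA F1 (ext3 F2).
Qed.

Lemma dir2 (R : nzRingType) (a w g y : R) :
  a * w * g * (a * w) = a * w -> g * (a * w) * g = g -> a * w * g = g * (a * w) ->
  w * a * w * y * (w * a * w) = w * a * w ->
  let x := g * (a * w) * y in
  [/\ a * (w * x) ^+ 2 = x, w * a * w * x = w * a * w * y
    & x * w * (a * w) ^+ 2 = a * w].
Proof.
rewrite !mulrA => G1 G2 G3 Y1 x; rewrite /x !expr2 !mulrA.
have GBB : g * a * w * a * w = a * w by rewrite -G3 G1.
have D1 : g = a * w * g * g by rewrite -{1}G2 -G3.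
have D2 : a * w * y * w * a * w = a * w.
  by have := congr1 (fun t => g * a * t) Y1; rewrite /= !mulrA GBB.
split.
- rewrite G1 [in LHS]D1 !mulrA D2 G3 G2 //.
- by have := congr1 (fun t => w * t * y) G1; rewrite /= !mulrA.
- by have := congr1 (fun t => g * t * a * w) D2; rewrite /= !mulrA GBB.
Qed.

Theorem theorem2p4 (C : numClosedFieldType) (A : algType C) (star : A -> A)
    (Hstar : is_star star) (a w : A) :
  w_core_invertible star a w <->
  (group_invertible (a * w) /\ inv13 star (w * a * w)).
Proof.
split.
- case=> x [H1 H2 H3].
  have F1 : a * w * (x * w) * (x * w) = x * w.
    by rewrite -{3}H1 expr2 !mulrA.
  have F2 : x * w * (a * w) * (a * w) = a * w.
    by rewrite -{3}H3 expr2 !mulrA.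
  have [G F4] := dir1 _ _ _ F1 F2.
  split=> //; exists x; split=> //.
  by have := congr1 (fun t => w * t) F4; rewrite /= !mulrA.
- case=> [[g [G1 G2 G3]] [y [Y1 Y2]]].
  have [E1 E2 E3] := dir2 _ _ _ _ _ G1 G2 G3 Y1.
  exists (g * (a * w) * y); split=> //.
  by rewrite E2.
Qed.
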